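(* Let $n\ge1$. The distributive skeleton functor $\mathfrak S\colon\mathsf{PMV}_n\to\mathsf{DL}$ is dual to the forgetful functor $\mathsf U\colon\mathcal X_n\to\mathsf{Priest}$. That is, there is a natural isomorphism $$D\circ\mathfrak S\cong\mathsf U\circ D_n.$$ Its component at $\mathbf A$ is the order-isomorphism and homeomorphism $$\mathsf{PMV}_n(\mathbf A,\mathbf{P\L}_n)\to\mathsf{DL}(\mathfrak S(\mathbf A),\mathbf 2),\qquad u\mapsto u|_{\mathfrak S(\mathbf A)}.$$
   Context: For $n\ge 1$, the algebra $\mathbf{P\L}_n=\langle\{0,\tfrac1n,\dots,1\},\min,\max,\odot,\oplus,0,1\rangle$ has $x\odot y=\max\{0,x+y-1\}$ and $x\oplus y=\min\{1,x+y\}$. $\mathsf{PMV}_n$ is the variety it generates. - $\mathcal S_n$ is the set of subalgebras $\mathbf R$ of $\mathbf{P\L}_n^2$ with $\{(x,y):x=0\text{ or }y=1\}\subseteq\mathbf R\subseteq\{(x,y):x\le y\}$. - $\mathcal X_n$ is the category of topological structures isomorphic to closed substructures of nonempty powers of $\langle\{0,\tfrac1n,\dots,1\},\mathcal S_n,\text{discrete}\rangle$, with continuous relation-preserving maps as morphisms. - $D_n\colon\mathsf{PMV}_n\to\mathcal X_n$ sends $\mathbf A$ to $\mathsf{PMV}_n(\mathbf A,\mathbf{P\L}_n)$ with pointwise relations and the subspace topology of the product topology. On morphisms it acts by precomposition. - $\mathsf{DL}$ is the category of bounded distributive lattices and $\mathsf{Priest}$ the category of Priestley spaces. - $D\colon\mathsf{DL}\to\mathsf{Priest}$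 is Priestley duality: $D(\mathbf L)=\mathsf{DL}(\mathbf L,\mathbf 2)$ with pointwise order and product topology, where $\mathbf 2$ is the two-element lattice. - Every $\mathbf X\in\mathcal X_n$ has an underlying Priestley space $\langle X,\le^{\mathbf X},\mathcal T\rangle$. The functor $\mathsf U$ sends $\mathbf X$ to this space and each morphism to itself. - The distributive skeleton of $\mathbf A\in\mathsf{PMV}_n$ is the bounded distributive lattice $\mathfrak S(\mathbf A)=\langle\{a\in A:a\oplus a=a\},\wedge,\vee,0,1\rangle$. On a homomorphism $h$, $\mathfrak S h=h|_{\mathfrak S(\mathbf A)}$. *)

(* Defs.v *)
From HB Require Import structures.
From mathcomp Require Import all_boot all_order all_algebra.
From mathcomp Require Import all_classical all_reals all_analysis.

Set Implicit Arguments.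
Unset Strict Implicit.
Unset Printing Implicit Defensive.

Local Open Scope classical_set_scope.

Record pmvSig := PmvSig {
  car :> Type;
  pmin : car -> car -> car;
  pmax : car -> car -> car;
  podot : car -> car -> car;
  poplus : car -> car -> car;
  pzero : car;
  pone : car }.

(* The algebra PL_n: the element k : 'I_n.+1 stands for k/n. *)
Definition PL (n : nat) : pmvSig :=
  @PmvSig 'I_n.+1
    (fun k l => inord (minn k l))
    (fun k l => inord (maxn k l))
    (fun k l => inord ((k + l) - n))      (* max{0, x+y-1} *)
    (fun k l => inord (minn n (k + l)))   (* min{1, x+y}   *)
    (inord 0) (inord n).

Inductive term :=
  | tVar of nat
  | tMin of term & term
  | tMax of term & term
  | tOdot of term & term
  | tOplus of term & term
  | tZero
  | tOne.

Fixpoint eval (A : pmvSig) (e : nat -> A) (t : term) : A :=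
  match t with
  | tVar i => e i
  | tMin s u => pmin (eval e s) (eval e u)
  | tMax s u => pmax (eval e s) (eval e u)
  | tOdot s u => podot (eval e s) (eval e u)
  | tOplus s u => poplus (eval e s) (eval e u)
  | tZero => pzero A
  | tOne => pone A
  end.

(* A belongs to the variety PMV_n generated by PL_n (= the class of models of
   all identities valid in PL_n, by Birkhoff's HSP theorem). *)
Definition in_PMV (n : nat) (A : pmvSig) : Prop :=
  forall s t : term,
    (forall e : nat -> PL n, eval e s = eval e t) ->
    forall e : nat -> A, eval e s = eval e t.

Definition is_hom (A B : pmvSig) (h : A -> B) : Prop :=
  (forall x y, h (pmin x y) = pmin (h x) (h y)) /\
  (forall x y, h (pmax x y) = pmax (h x) (h y)) /\
  (forall x y, h (podot x y) = podot (h x) (h y)) /\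
  (forall x y, h (poplus x y) = poplus (h x) (h y)) /\
  h (pzero A) = pzero B /\
  h (pone A) = pone B.

(* Carrier of the distributive skeleton S(A): the oplus-idempotents. *)
Definition skel (A : pmvSig) : Type := {a : A | poplus a a = a}.

Definition is_DLhom (A : pmvSig) (f : skel A -> bool) : Prop :=
  [/\ forall x y z : skel A, sval z = pmin (sval x) (sval y) -> f z = f x && f y,
      forall x y z : skel A, sval z = pmax (sval x) (sval y) -> f z = f x || f y,
      forall z : skel A, sval z = pzero A -> f z = false
    & forall z : skel A, sval z = pone A -> f z = true].

Definition DnSpace (n : nat) (A : pmvSig) : topologicalType :=
  {ptws A -> discrete_topology 'I_n.+1}.

Definition DSpace (A : pmvSig) : topologicalType :=
  {ptws skel A -> discrete_topology bool}.

Definition Dn (n : nat) (A : pmvSig) : set (DnSpace n A) :=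
  [set u | @is_hom A (PL n) u].

Definition DS (A : pmvSig) : set (DSpace A) := [set f | is_DLhom f].

(* The component u |-> u restricted to S(A), reading the value 1 of PL_n as
   true and 0 as false (the subalgebra {0,1} of PL_n is identified with 2). *)
Definition restr (n : nat) (A : pmvSig) (u : DnSpace n A) : DSpace A :=
  fun s : skel A => (u (sval s) : 'I_n.+1) == ord_max.

Definition leDn (n : nat) (A : pmvSig) (u v : DnSpace n A) : Prop :=
  forall a : A, ((u a : 'I_n.+1) <= (v a : 'I_n.+1))%N.
Definition leDS (A : pmvSig) (f g : DSpace A) : Prop :=
  forall s : skel A, f s ==> g s.

Arguments Dn : clear implicits.
Arguments DS : clear implicits.
Arguments restr : clear implicits.
Arguments leDn : clear implicits.
Arguments leDS : clear implicits.

(* Main.v *)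
Require Import Defs.
From HB Require Import structures.
From mathcomp Require Import all_boot all_order all_algebra.
From mathcomp Require Import all_classical all_reals all_analysis.
From mathcomp Require Import zify.
Local Open Scope classical_set_scope.
Set Implicit Arguments.
Unset Strict Implicit.
Unset Printing Implicit Defensive.
Local Open Scope nat_scope.

Lemma valPL_le n (x : 'I_n.+1) : nat_of_ord x <= n.
Proof. by rewrite -ltnS ltn_ord. Qed.
Lemma valPLmin n (x y : 'I_n.+1) : nat_of_ord (@pmin (PL n) x y) = minn x y.
Proof. by rewrite /= inordK // ltnS; have := valPL_le x; lia. Qed.
Lemma valPLmax n (x y : 'I_n.+1) : nat_of_ord (@pmax (PL n) x y) = maxn x y.
Proof. by rewrite /= inordK // ltnS; have := valPL_le x; have := valPL_le y; lia. Qed.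
Lemma valPLodot n (x y : 'I_n.+1) : nat_of_ord (@podot (PL n) x y) = (x + y) - n.
Proof. by rewrite /= inordK // ltnS; have := valPL_le x; have := valPL_le y; lia. Qed.
Lemma valPLoplus n (x y : 'I_n.+1) : nat_of_ord (@poplus (PL n) x y) = minn n (x + y).
Proof. by rewrite /= inordK // ltnS geq_minl. Qed.
Lemma valPLzero n : nat_of_ord (pzero (PL n) : 'I_n.+1) = 0.
Proof. by rewrite /= inordK. Qed.
Lemma valPLone n : nat_of_ord (pone (PL n) : 'I_n.+1) = n.
Proof. by rewrite /= inordK. Qed.
Fixpoint ZF (A : pmvSig) (m k : nat) (a : A) : A :=
  match m with
  | 0 => a
  | m'.+1 => let b := ZF m' k./2 a in if odd k then podot b b else poplus b b
  end.

Fixpoint Zt (m k : nat) (t : term) : term :=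
  match m with
  | 0 => t
  | m'.+1 => let b := Zt m' k./2 t in if odd k then tOdot b b else tOplus b b
  end.

Lemma eval_Zt (A : pmvSig) (e : nat -> A) m k t : Defs.eval e (Zt m k t) = ZF m k (Defs.eval e t).
Proof. by elim: m k => [|m IH] k //=; case: (odd k) => /=; rewrite IH. Qed.

Lemma ZF_PL n m k (a : 'I_n.+1) : k < 2 ^ m -> nat_of_ord (@ZF (PL n) m k a : 'I_n.+1) = minn n (2 ^ m * a - k * n).
Proof.
elim: m k => [|m IH] k /=.
  rewrite expn0 ltnS leqn0 => /eqP ->; rewrite mul1n mul0n subn0.
  by have := valPL_le a; lia.
move=> hk.
have hk2 : k./2 < 2 ^ m.
  by have := odd_double_half k; rewrite expnS in hk; lia.
have hb := IH _ hk2.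
have hkn : k * n = odd k * n + 2 * (k./2 * n).
  by rewrite -{1}(odd_double_half k) -muln2 mulnDl mulnAC [2 * _]mulnC.
have hX : 2 ^ m.+1 * a = 2 * (2 ^ m * a) by rewrite expnS mulnA.
rewrite hkn hX.
case: (odd k) => /=; [rewrite valPLodot | rewrite valPLoplus]; rewrite hb;
  set X := 2 ^ m * a; set Y := k./2 * n; lia.
Qed.

Definition Pw (n : nat) := 2 ^ n.+1.
Definition Kc (n i : nat) := (Pw n * i.-1 + n.-1) %/ n.

Lemma Kc_props n i : 0 < n -> 0 < i -> i <= n ->
  [/\ Pw n * i.-1 <= Kc n i * n, (Kc n i).+1 * n <= Pw n * i & Kc n i < Pw n].
Proof.
move=> hn hi hin.
have hP : 2 * n <= Pw n.
  by rewrite /Pw expnS leq_mul2l /=; apply: ltnW; apply: ltn_expl.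
have hd := divn_eq (Pw n * i.-1 + n.-1) n.
have hr := ltn_pmod (Pw n * i.-1 + n.-1) hn.
rewrite -/(Kc n i) in hd.
have hPi : Pw n * i = Pw n * i.-1 + Pw n by rewrite -mulnSr prednK.
have hPn : Pw n * i <= Pw n * n by rewrite leq_mul2l hin orbT.
set Q := Kc n i * n in hd *; set R := _ %% n in hd hr.
split; first by lia.
  by rewrite mulSn; lia.
rewrite ltnNge; apply/negP => hle.
have : Pw n * n <= Kc n i * n by rewrite leq_mul2r hle orbT.
rewrite -/Q; lia.
Qed.

Lemma step_PL n i (a : 'I_n.+1) : 0 < n -> 0 < i -> i <= n ->
  nat_of_ord (@ZF (PL n) n.+1 (Kc n i) a : 'I_n.+1) = if i <= a then n else 0.
Proof.
move=> hn hi hin; have [h1 h2 h3] := Kc_props hn hi hin.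
rewrite ZF_PL // -/(Pw n).
case: ifP => hia.
  have : Pw n * i <= Pw n * a by rewrite leq_mul2l hia orbT.
  set X := Pw n * a; set Y := Pw n * i; set Q := Kc n i * n in h1 h2 *.
  rewrite mulSn -/Q in h2; lia.
have : Pw n * a <= Pw n * i.-1 by rewrite leq_mul2l; apply/orP; right; lia.
set X := Pw n * a; set Y := Pw n * i.-1; set Q := Kc n i * n in h1 h2 *; lia.
Qed.

Definition tau (n i : nat) (t : term) : term :=
  if i == 0 then tOne else if n < i then tZero else Zt n.+1 (Kc n i) t.
Definition TF (A : pmvSig) (n i : nat) (a : A) : A :=
  if i == 0 then pone A else if n < i then pzero A else ZF n.+1 (Kc n i) a.

Lemma eval_tau (A : pmvSig) (e : nat -> A) n i t : Defs.eval e (tau n i t) = TF n i (Defs.eval e t).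
Proof. by rewrite /tau /TF; case: eqP => //; case: ltnP => // _ _; rewrite eval_Zt. Qed.

Lemma TF_PL n i (a : 'I_n.+1) : 0 < n -> nat_of_ord (@TF (PL n) n i a : 'I_n.+1) = if i <= a then n else 0.
Proof.
move=> hn; rewrite /TF; case: eqP => [->|/eqP hi0]; first by rewrite valPLone.
case: ltnP => hin.
  by rewrite valPLzero; have := valPL_le a; case: ifP => //; lia.
by rewrite step_PL // lt0n.
Qed.
Lemma ptws_cvg (X : topologicalType) (U : Type) (V : topologicalType)
  (h : X -> {ptws U -> V}) (x : X) :
  (forall u, (fun y => h y u) @ x --> h x u) -> h @ x --> h x.
Proof.
move=> hu; apply/cvg_sup => u A.
rewrite nbhsE => -[B [[C Cop <-] Bx] sBA].
have hC : nbhs (h x u) C by apply: open_nbhs_nbhs.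
have H := hu u C hC.
exact: (@filterS _ (nbhs x) _ _ _ (fun y Cy => sBA _ Cy) H).
Qed.
Lemma ptws_nbhs (U : Type) (V : topologicalType) (f0 : {ptws U -> V}) (x : U) (W : set V) :
  nbhs (f0 x) W -> nbhs f0 [set g : {ptws U -> V} | W (g x)].
Proof.
move=> Wx.
have := @cvg_id _ (nbhs f0).
move/cvg_sup => /(_ x) h. 
exact: (h _ (@initial_continuous _ V (fun f : (forall i : U, V) => f x) f0 W Wx)).
Qed.

Inductive bterm :=
  | bT of nat & term
  | bAnd of bterm & bterm
  | bOr of bterm & bterm
  | bTop
  | bBot.

Fixpoint btr (n : nat) (s : bterm) : term :=
  match s with
  | bT i t => tau n i t
  | bAnd s1 s2 => tMin (btr n s1) (btr n s2)
  | bOr s1 s2 => tMax (btr n s1) (btr n s2)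
  | bTop => tOne
  | bBot => tZero
  end.

Fixpoint bPL (n : nat) (e : nat -> PL n) (s : bterm) : bool :=
  match s with
  | bT i t => i <= nat_of_ord (Defs.eval e t : 'I_n.+1)
  | bAnd s1 s2 => bPL e s1 && bPL e s2
  | bOr s1 s2 => bPL e s1 || bPL e s2
  | bTop => true
  | bBot => false
  end.

Definition fl (A : pmvSig) (f : skel A -> bool) (a : A) : bool :=
  `[< exists z : skel A, sval z = a /\ f z >].

Fixpoint bA (A : pmvSig) (n : nat) (f : skel A -> bool) (e : nat -> A) (s : bterm) : bool :=
  match s with
  | bT i t => fl f (TF n i (Defs.eval e t))
  | bAnd s1 s2 => bA n f e s1 && bA n f e s2
  | bOr s1 s2 => bA n f e s1 || bA n f e s2
  | bTop => true
  | bBot => false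
  end.

Lemma btr_PL n (e : nat -> PL n) s : 0 < n ->
  nat_of_ord (Defs.eval e (btr n s) : 'I_n.+1) = if bPL e s then n else 0.
Proof.
move=> hn; elim: s => [i t|s1 IH1 s2 IH2|s1 IH1 s2 IH2||] /=.
- by rewrite eval_tau TF_PL.
- by rewrite valPLmin IH1 IH2; case: (bPL e s1); case: (bPL e s2) => //=; lia.
- by rewrite valPLmax IH1 IH2; case: (bPL e s1); case: (bPL e s2) => //=; lia.
- exact: valPLone.
- exact: valPLzero.
Qed.

Lemma idem_A n (A : pmvSig) (hA : in_PMV n A) (e : nat -> A) s : 0 < n ->
  poplus (Defs.eval e (btr n s)) (Defs.eval e (btr n s)) = Defs.eval e (btr n s).
Proof.
move=> hn.
apply: (hA (tOplus (btr n s) (btr n s)) (btr n s)) => e'.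
apply: val_inj => /=.
rewrite -[val _]/(nat_of_ord (@poplus (PL n) _ _)) valPLoplus.
rewrite -[val _]/(nat_of_ord (Defs.eval e' (btr n s) : 'I_n.+1)) btr_PL //.
by case: (bPL e' s); lia.
Qed.

Lemma fl_sval (A : pmvSig) (f : skel A -> bool) (z : skel A) : fl f (sval z) = f z.
Proof.
apply/idP/idP => [/asboolP [z' [hz' fz']] | fz]; last by apply/asboolP; exists z.
move: fz'; case: z hz' => a pa; case: z' => a' pa' /= ea; subst a'.
by rewrite (Prop_irrelevance pa pa').
Qed.

Lemma bA_correct n (A : pmvSig) (hA : in_PMV n A) (f : skel A -> bool) (e : nat -> A) s :
  0 < n -> is_DLhom f -> fl f (Defs.eval e (btr n s)) = bA n f e s.
Proof.
move=> hn [fm fj f0 f1].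
elim: s => [i t|s1 IH1 s2 IH2|s1 IH1 s2 IH2||] /=.
- by rewrite eval_tau.
- pose z1 : skel A := exist _ _ (idem_A hA e s1 hn).
  pose z2 : skel A := exist _ _ (idem_A hA e s2 hn).
  pose z : skel A := exist _ _ (idem_A hA e (bAnd s1 s2) hn).
  rewrite -[pmin _ _]/(sval z) fl_sval (fm z1 z2 z erefl).
  by rewrite -IH1 -IH2 -[Defs.eval e (btr n s1)]/(sval z1) -[Defs.eval e (btr n s2)]/(sval z2) !fl_sval.
- pose z1 : skel A := exist _ _ (idem_A hA e s1 hn).
  pose z2 : skel A := exist _ _ (idem_A hA e s2 hn).
  pose z : skel A := exist _ _ (idem_A hA e (bOr s1 s2) hn).
  rewrite -[pmax _ _]/(sval z) fl_sval (fj z1 z2 z erefl).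
  by rewrite -IH1 -IH2 -[Defs.eval e (btr n s1)]/(sval z1) -[Defs.eval e (btr n s2)]/(sval z2) !fl_sval.
- pose z : skel A := exist _ _ (idem_A hA e bTop hn).
  by rewrite -[pone _]/(sval z) fl_sval f1.
- pose z : skel A := exist _ _ (idem_A hA e bBot hn).
  by rewrite -[pzero _]/(sval z) fl_sval f0.
Qed.

Lemma btransfer n (A : pmvSig) (hA : in_PMV n A) (f : skel A -> bool) s1 s2 :
  0 < n -> is_DLhom f -> (forall e : nat -> PL n, bPL e s1 = bPL e s2) ->
  forall e : nat -> A, bA n f e s1 = bA n f e s2.
Proof.
move=> hn hf H e; rewrite -!bA_correct //; congr fl.
apply: (hA (btr n s1) (btr n s2)) => e'; apply: val_inj.
rewrite -[val _]/(nat_of_ord (Defs.eval e' (btr n s1) : 'I_n.+1)).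
rewrite -[val _]/(nat_of_ord (Defs.eval e' (btr n s2) : 'I_n.+1)).
by rewrite !btr_PL // H.
Qed.

Lemma hom_ZF (A : pmvSig) n (h : A -> PL n) m k a : is_hom h -> h (ZF m k a) = ZF m k (h a).
Proof.
move=> [_ [_ [hod [hop _]]]].
by elim: m k => [|m IH] k //=; case: (odd k); rewrite ?hod ?hop IH.
Qed.

Lemma hom_TF (A : pmvSig) n (h : A -> PL n) i a : is_hom h -> h (TF n i a) = TF n i (h a).
Proof.
move=> hh; rewrite /TF; case: eqP => _; first by case: hh => [_ [_ [_ [_ []]]]].
by case: ltnP => _; [case: hh => [_ [_ [_ [_ []]]]] | exact: hom_ZF].
Qed.

Definition bigOr (F : nat -> bterm) (l : seq nat) : bterm :=
  foldr (fun j acc => bOr (F j) acc) bBot l.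

Lemma bPL_bigOr n (e : nat -> PL n) F l : bPL e (bigOr F l) = has (fun j => bPL e (F j)) l.
Proof. by elim: l => //= j l ->. Qed.

Lemma bA_bigOr (A : pmvSig) n f (e : nat -> A) F l : bA n f e (bigOr F l) = has (fun j => bA n f e (F j)) l.
Proof. by elim: l => //= j l ->. Qed.

Lemma arith_oplus n i X Y : i <= n -> X <= n -> Y <= n ->
  (i <= minn n (X + Y)) = has (fun j => (j <= X) && (i - j <= Y)) (iota 0 n.+1).
Proof.
move=> hi hX hY; apply/idP/hasP => [h|[j hj /andP [h1 h2]]].
  exists (minn X i); first by rewrite mem_iota /=; lia.
  apply/andP; split; lia.
lia.
Qed.

Lemma arith_odot n i X Y : 0 < i -> X <= n -> Y <= n ->
  (i <= (X + Y) - n) = has (fun j => (j <= X) && (n + i - j <= Y)) (iota 0 n.+1).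
Proof.
move=> hi hX hY; apply/idP/hasP => [h|[j hj /andP [h1 h2]]].
  exists X; first by rewrite mem_iota /=; lia.
  apply/andP; split; lia.
move: hj; rewrite mem_iota /= => hj; lia.
Qed.

Lemma ext_ord n (x y : nat) : x <= n -> y <= n ->
  (forall i, 0 < i -> i <= n -> (i <= x) = (i <= y)) -> x = y.
Proof.
move=> hx hy H; apply/eqP; rewrite eqn_leq; apply/andP; split.
  case: (posnP x) => [->//|hx0]; by rewrite -(H x hx0 hx) leqnn.
case: (posnP y) => [->//|hy0]; by rewrite (H y hy0 hy) leqnn.
Qed.

Definition e2 (A : Type) (a b : A) : nat -> A := fun j => if j == 0 then a else b.

Fixpoint ntimes1 (k : nat) (t : term) : term :=
  match k with 0 => t | k'.+1 => tOplus t (ntimes1 k' t) end.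

Lemma ntimes1_PL n k (e : nat -> PL n) t :
  nat_of_ord (Defs.eval e (ntimes1 k t) : 'I_n.+1) = minn n (k.+1 * nat_of_ord (Defs.eval e t : 'I_n.+1)).
Proof.
elim: k => [|k IH] /=; first by rewrite mul1n; have := valPL_le (Defs.eval e t : 'I_n.+1); lia.
rewrite valPLoplus IH mulSn; set X := nat_of_ord _; set Y := k.+1 * X; lia.
Qed.

Lemma ntimes1_idem (A : pmvSig) k (e : nat -> A) t :
  poplus (Defs.eval e t) (Defs.eval e t) = Defs.eval e t -> Defs.eval e (ntimes1 k t) = Defs.eval e t.
Proof. by move=> h; elim: k => //= k ->. Qed.

Lemma TF1_idem n (A : pmvSig) (hA : in_PMV n A) (a : A) : 0 < n -> poplus a a = a -> TF n 1 a = a.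
Proof.
move=> hn ha.
suff H : forall e : nat -> PL n, Defs.eval e (tau n 1 (tVar 0)) = Defs.eval e (ntimes1 n.-1 (tVar 0)).
  have := hA _ _ H (fun _ => a); rewrite eval_tau => ->.
  by rewrite ntimes1_idem.
move=> e; apply: val_inj.
rewrite -[val _]/(nat_of_ord (Defs.eval e (tau n 1 (tVar 0)) : 'I_n.+1)).
rewrite -[val _]/(nat_of_ord (Defs.eval e (ntimes1 n.-1 (tVar 0)) : 'I_n.+1)).
rewrite eval_tau TF_PL // ntimes1_PL prednK //=.
set X := nat_of_ord _; case: ifP => h.
  have : n <= n * X by rewrite -{1}(muln1 n) leq_mul2l h orbT.
  lia.
have hX : X = 0 by lia.
by rewrite hX muln0.
Qed.

Lemma K1 n (A : pmvSig) (u : A -> PL n) i a : 0 < n -> is_hom u ->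
  (nat_of_ord (u (TF n i a) : 'I_n.+1) == n) = (i <= nat_of_ord (u a : 'I_n.+1)).
Proof.
move=> hn hu; rewrite hom_TF // TF_PL //; case: ifP => _; first by rewrite eqxx.
by case: (n) hn.
Qed.

Lemma hom_idem n (A : pmvSig) (u : A -> PL n) a : 0 < n -> is_hom u -> poplus a a = a ->
  (nat_of_ord (u a : 'I_n.+1) == n) = (1 <= nat_of_ord (u a : 'I_n.+1)).
Proof.
move=> hn hu ha; have := congr1 u ha; case: (hu) => [_ [_ [_ [hop _]]]]; rewrite hop.
move/(congr1 (fun x : 'I_n.+1 => nat_of_ord x)); rewrite valPLoplus.
have := valPL_le (u a : 'I_n.+1); set X := nat_of_ord _ => h1 h2.
apply/eqP/idP => h; lia.
Qed.

Lemma TF_skel n (A : pmvSig) (hA : in_PMV n A) (hn : 0 < n) i (a : A) :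
  poplus (TF n i a) (TF n i a) = TF n i a.
Proof. by have := idem_A hA (fun _ => a) (bT i (tVar 0)) hn; rewrite /= eval_tau. Qed.

Definition zT n (A : pmvSig) (hA : in_PMV n A) (hn : 0 < n) i (a : A) : skel A :=
  exist _ (TF n i a) (TF_skel hA hn i a).

Lemma ordmaxE n (x : 'I_n.+1) : (x == ord_max) = (nat_of_ord x == n).
Proof. by rewrite -val_eqE. Qed.

Lemma restr_zT n (A : pmvSig) (hA : in_PMV n A) (hn : 0 < n) (u : A -> PL n) i a :
  is_hom u -> restr n A u (zT hA hn i a) = (i <= nat_of_ord (u a : 'I_n.+1)).
Proof. by move=> hu; rewrite /restr ordmaxE /= K1. Qed.

Lemma restr_DL n (A : pmvSig) (u : A -> PL n) : 0 < n -> is_hom u -> is_DLhom (restr n A u).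
Proof.
move=> hn [hmin [hmax [_ [_ [h0 h1]]]]]; split => [x y z|x y z|z|z] /= hz; rewrite /restr !ordmaxE hz.
- rewrite hmin valPLmin; have := valPL_le (u (sval x) : 'I_n.+1); have := valPL_le (u (sval y) : 'I_n.+1).
  set X := nat_of_ord _; set Y := nat_of_ord _ => h2 h3.
  by apply/eqP/andP => [h|[/eqP h4 /eqP h5]]; [split; apply/eqP|]; lia.
- rewrite hmax valPLmax; have := valPL_le (u (sval x) : 'I_n.+1); have := valPL_le (u (sval y) : 'I_n.+1).
  set X := nat_of_ord _; set Y := nat_of_ord _ => h2 h3.
  by apply/eqP/orP => [h|[/eqP h4|/eqP h5]]; [case: (leqP X Y) => ?; [left|right]; apply/eqP|..]; lia.
- by rewrite h0 valPLzero; case: (n) hn.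
- by rewrite h1 valPLone eqxx.
Qed.

Lemma restr_inj n (A : pmvSig) (hA : in_PMV n A) (hn : 0 < n) (u v : A -> PL n) :
  is_hom u -> is_hom v -> restr n A u =1 restr n A v -> u = v.
Proof.
move=> hu hv H; apply: funext => a; apply: val_inj.
apply: (@ext_ord n); rewrite ?valPL_le // => i _ _.
by rewrite -(restr_zT hA hn i a hu) -(restr_zT hA hn i a hv) H.
Qed.

Definition gF n (A : pmvSig) (hA : in_PMV n A) (hn : 0 < n) (f : skel A -> bool) (a : A) : 'I_n.+1 :=
  inord (find (fun j => ~~ f (zT hA hn j.+1 a)) (iota 0 n)).

Lemma fl_zT n (A : pmvSig) (hA : in_PMV n A) (hn : 0 < n) (f : skel A -> bool) i a :
  fl f (TF n i a) = f (zT hA hn i a).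
Proof. exact: (fl_sval f (zT hA hn i a)). Qed.

Lemma G_down n (A : pmvSig) (hA : in_PMV n A) (hn : 0 < n) (f : skel A -> bool) a i j :
  is_DLhom f -> j <= i -> f (zT hA hn i a) -> f (zT hA hn j a).
Proof.
move=> hf hji.
have H : forall e : nat -> PL n,
    bPL e (bAnd (bT i (tVar 0)) (bT j (tVar 0))) = bPL e (bT i (tVar 0)).
  move=> e /=; case: leqP => // h; apply: leq_trans hji h.
have := btransfer hA hn hf H (fun _ => a); rewrite /= !fl_zT => <-.
by case/andP.
Qed.

Lemma G_zero n (A : pmvSig) (hA : in_PMV n A) (hn : 0 < n) (f : skel A -> bool) a :
  is_DLhom f -> f (zT hA hn 0 a).
Proof.
move=> hf.
have H : forall e : nat -> PL n, bPL e (bT 0 (tVar 0)) = bPL e bTop by [].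
by have := btransfer hA hn hf H (fun _ => a); rewrite /= !fl_zT => ->.
Qed.

Lemma G_big n (A : pmvSig) (hA : in_PMV n A) (hn : 0 < n) (f : skel A -> bool) a i :
  is_DLhom f -> n < i -> f (zT hA hn i a) = false.
Proof.
move=> hf hi.
have H : forall e : nat -> PL n, bPL e (bT i (tVar 0)) = bPL e bBot.
  move=> e /=; have := valPL_le (e 0 : 'I_n.+1); lia.
by have := btransfer hA hn hf H (fun _ => a); rewrite /= !fl_zT => ->.
Qed.

Lemma G1 n (A : pmvSig) (hA : in_PMV n A) (hn : 0 < n) (f : skel A -> bool) a i :
  is_DLhom f -> f (zT hA hn i a) = (i <= nat_of_ord (gF hA hn f a)).
Proof.
move=> hf; rewrite /gF.
set P := (fun j => ~~ f (zT hA hn j.+1 a)).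
have hc : find P (iota 0 n) <= n by have := find_size P (iota 0 n); rewrite size_iota.
rewrite inordK ?ltnS //.
set c := find P (iota 0 n) in hc *.
case: (posnP i) => [->|hi0]; first by rewrite G_zero.
case: (leqP i n) => hin; last by rewrite G_big //; lia.
case: (leqP i c) => hic.
  have hlt : i.-1 < c by lia.
  have := @before_find _ 0 P (iota 0 n) i.-1 hlt; rewrite nth_iota; last by lia.
  by rewrite add0n /P prednK // => /negbFE.
apply/negbTE/negP => hf1.
have hcs : c < size (iota 0 n) by rewrite size_iota; lia.
have := @nth_find _ 0 P (iota 0 n); rewrite has_find -/c => /(_ hcs).
rewrite nth_iota; last by lia.
by rewrite /P add0n (G_down hf _ hf1).
Qed.

Lemma G_ext n (A : pmvSig) (hA : in_PMV n A) (hn : 0 < n) (f : skel A -> bool) a (w : 'I_n.+1) :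
  is_DLhom f -> (forall i, 0 < i -> i <= n -> f (zT hA hn i a) = (i <= nat_of_ord w)) ->
  gF hA hn f a = w.
Proof.
move=> hf H; apply: val_inj; apply: (@ext_ord n); rewrite ?valPL_le // => i h1 h2.
by rewrite -(G1 _ _ _ _ hf) H.
Qed.

Lemma G_hom n (A : pmvSig) (hA : in_PMV n A) (hn : 0 < n) (f : skel A -> bool) :
  is_DLhom f -> is_hom (gF hA hn f : A -> PL n).
Proof.
move=> hf.
have hG i a : fl f (TF n i a) = (i <= nat_of_ord (gF hA hn f a)) by rewrite fl_zT G1.
have hle a : nat_of_ord (gF hA hn f a) <= n by apply: valPL_le.
split; [|split; [|split; [|split; [|split]]]].
- move=> a b; apply: G_ext => // i hi hin.
  have H : forall e : nat -> PL n, bPL e (bT i (tMin (tVar 0) (tVar 1)))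
      = bPL e (bAnd (bT i (tVar 0)) (bT i (tVar 1))).
    by move=> e /=; rewrite valPLmin leq_min.
  have := btransfer hA hn hf H (e2 a b); rewrite /= -!fl_zT /= => ->.
  by rewrite !hG valPLmin leq_min.
- move=> a b; apply: G_ext => // i hi hin.
  have H : forall e : nat -> PL n, bPL e (bT i (tMax (tVar 0) (tVar 1)))
      = bPL e (bOr (bT i (tVar 0)) (bT i (tVar 1))).
    by move=> e /=; rewrite valPLmax leq_max.
  have := btransfer hA hn hf H (e2 a b); rewrite /= -!fl_zT /= => ->.
  by rewrite !hG valPLmax leq_max.
- move=> a b; apply: G_ext => // i hi hin.
  have H : forall e : nat -> PL n, bPL e (bT i (tOdot (tVar 0) (tVar 1)))
      = bPL e (bigOr (fun j => bAnd (bT j (tVar 0)) (bT (n + i - j) (tVar 1))) (iota 0 n.+1)).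
    by move=> e; rewrite bPL_bigOr /= valPLodot arith_odot // valPL_le.
  have E : has (fun j => bA n f (e2 a b) (bAnd (bT j (tVar 0)) (bT (n + i - j) (tVar 1)))) (iota 0 n.+1)
      = has (fun j => (j <= nat_of_ord (gF hA hn f a)) && (n + i - j <= nat_of_ord (gF hA hn f b))) (iota 0 n.+1).
    by apply: eq_has => j /=; rewrite !hG.
  have L : bA n f (e2 a b) (bT i (tOdot (tVar 0) (tVar 1))) = f (zT hA hn i (podot a b)) by rewrite /= fl_zT.
  have := btransfer hA hn hf H (e2 a b); rewrite bA_bigOr E L => ->.
  by rewrite valPLodot arith_odot // valPL_le.
- move=> a b; apply: G_ext => // i hi hin.
  have H : forall e : nat -> PL n, bPL e (bT i (tOplus (tVar 0) (tVar 1)))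
      = bPL e (bigOr (fun j => bAnd (bT j (tVar 0)) (bT (i - j) (tVar 1))) (iota 0 n.+1)).
    by move=> e; rewrite bPL_bigOr /= valPLoplus arith_oplus // valPL_le.
  have E : has (fun j => bA n f (e2 a b) (bAnd (bT j (tVar 0)) (bT (i - j) (tVar 1)))) (iota 0 n.+1)
      = has (fun j => (j <= nat_of_ord (gF hA hn f a)) && (i - j <= nat_of_ord (gF hA hn f b))) (iota 0 n.+1).
    by apply: eq_has => j /=; rewrite !hG.
  have L : bA n f (e2 a b) (bT i (tOplus (tVar 0) (tVar 1))) = f (zT hA hn i (poplus a b)) by rewrite /= fl_zT.
  have := btransfer hA hn hf H (e2 a b); rewrite bA_bigOr E L => ->.
  by rewrite valPLoplus arith_oplus // valPL_le.
- apply: G_ext => // i hi hin.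
  have H : forall e : nat -> PL n, bPL e (bT i tZero) = bPL e bBot.
    by move=> e /=; rewrite valPLzero; case: (i) hi.
  have := btransfer hA hn hf H (fun _ => pzero A); rewrite /= -!fl_zT /= => ->.
  by rewrite valPLzero; case: (i) hi.
- apply: G_ext => // i hi hin.
  have H : forall e : nat -> PL n, bPL e (bT i tOne) = bPL e bTop.
    by move=> e /=; rewrite valPLone hin.
  have := btransfer hA hn hf H (fun _ => pone A); rewrite /= -!fl_zT /= => ->.
  by rewrite valPLone hin.
Qed.

Lemma skel_eq (A : pmvSig) (z z' : skel A) : sval z = sval z' -> z = z'.
Proof.
case: z => a pa; case: z' => a' pa' /= e; subst a'.
by rewrite (Prop_irrelevance pa pa').
Qed.

Lemma restr_g n (A : pmvSig) (hA : in_PMV n A) (hn : 0 < n) (f : skel A -> bool) (s : skel A) :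
  is_DLhom f -> restr n A (gF hA hn f) s = f s.
Proof.
move=> hf; rewrite /restr ordmaxE (hom_idem hn (G_hom hA hn hf) (proj2_sig s)).
rewrite -(G1 _ _ _ _ hf); congr f; apply: skel_eq => /=.
by apply: TF1_idem => //; exact: (proj2_sig s).
Qed.

Lemma restr_order n (A : pmvSig) (hA : in_PMV n A) (hn : 0 < n) (u v : A -> PL n) :
  is_hom u -> is_hom v -> (leDn n A u v <-> leDS A (restr n A u) (restr n A v)).
Proof.
move=> hu hv; split => H.
  move=> s; rewrite /restr !ordmaxE; apply/implyP => /eqP h.
  have := H (sval s); have := valPL_le (v (sval s) : 'I_n.+1).
  rewrite h; move=> h1 h2; apply/eqP; lia.
move=> a; have := H (zT hA hn (nat_of_ord (u a : 'I_n.+1)) a).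
by rewrite !restr_zT // leqnn.
Qed.

Lemma nbhs_fin (U : Type) (V : discreteTopologicalType) (f0 : {ptws U -> V}) (p : nat -> U) k :
  nbhs f0 [set f : {ptws U -> V} | forall j, j < k -> f (p j) = f0 (p j)].
Proof.
elim: k => [|k IH].
  by apply: filterS filterT => f _ j.
have FF : Filter (nbhs f0) by exact: (@filter_filter _ _ (@nbhs_pfilter {ptws U -> V} f0)).
have H := @filterI _ _ FF _ _ IH (@ptws_nbhs _ _ f0 (p k) _ (discrete_set1 (f0 (p k)))).
apply: (@filterS _ _ FF _ _ _ H).
move=> f [h1 h2] j; rewrite ltnS leq_eqVlt => /orP [/eqP ->|hj]; [exact: h2 | exact: h1].
Qed.

Lemma restr_cont n (A : pmvSig) : continuous (restr n A).
Proof.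
move=> u; apply: ptws_cvg => s.
have FF : Filter (nbhs u) by exact: (@filter_filter _ _ (@nbhs_pfilter (DnSpace n A) u)).
apply/discrete_cvg.
have H := @ptws_nbhs _ _ u (sval s) _ (discrete_set1 (u (sval s))).
apply: (@filterS _ _ FF _ _ _ H) => u' Hu.
rewrite /= /restr.
have -> : u' (sval s) = u (sval s) by exact: Hu.
by [].
Qed.

Lemma g_cont n (A : pmvSig) (hA : in_PMV n A) (hn : 0 < n) :
  continuous (fun f : DSpace A => (gF hA hn f : DnSpace n A)).
Proof.
move=> f; apply: ptws_cvg => a.
have FF : Filter (nbhs f) by exact: (@filter_filter _ _ (@nbhs_pfilter (DSpace A) f)).
apply/discrete_cvg.
have H := @nbhs_fin _ _ f (fun j => zT hA hn j.+1 a) n.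
apply: (@filterS _ _ FF _ _ _ H) => f' /= Hf.
rewrite /gF; congr inord; apply: eq_in_find => j; rewrite mem_iota => /andP [_ hj] /=.
by rewrite Hf.
Qed.

Local Close Scope nat_scope.

Theorem theorem4p4 (n : nat) (hn : (1 <= n)%N) :
  (forall A : pmvSig, in_PMV n A ->
     [/\ set_bij (Dn n A) (DS A) (restr n A),
         (forall u v, Dn n A u -> Dn n A v ->
            (leDn n A u v <-> leDS A (restr n A u) (restr n A v))),
         {within Dn n A, continuous (restr n A)}
       & exists g : DSpace A -> DnSpace n A,
           [/\ {within DS A, continuous g},
               (forall u, Dn n A u -> g (restr n A u) = u)
             & (forall f, DS A f -> restr n A (g f) = f)]])
  /\
  (forall (A B : pmvSig) (h : A -> B), in_PMV n A -> in_PMV n B ->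
     is_hom h ->
     forall v : DnSpace n B, Dn n B v ->
     forall (s : skel A) (t : skel B), sval t = h (sval s) ->
       restr n A (v \o h : DnSpace n A) s = restr n B v t).
Proof.
split; last by move=> A B h _ _ _ v _ s t e; rewrite /restr /= e.
move=> A hA.
have hn' : (0 < n)%N := hn.
split.
- split.
  + by move=> u Du; apply: restr_DL.
  + move=> u v; rewrite !inE => Du Dv H.
    by apply: (restr_inj hA hn' Du Dv) => s; rewrite H.
  + move=> f Df; exists (gF hA hn' f : DnSpace n A); first exact: G_hom.
    by apply: funext => s; apply: restr_g.
- by move=> u v Du Dv; apply: restr_order.
- by apply: continuous_subspaceT; apply: restr_cont.
- exists (fun f : DSpace A => (gF hA hn' f : DnSpace n A)); split.
  + by apply: continuous_subspaceT; apply: g_cont.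
  + move=> u Du; apply: (restr_inj hA hn' (G_hom hA hn' (restr_DL hn' Du)) Du) => s.
    by apply: restr_g; apply: restr_DL.
  + by move=> f Df; apply: funext => s; apply: restr_g.
Qed.
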